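(* If $\gamma<1$, then for all $k\ge0$, $$\|\mathbf H^{k+1}-\mathbf W^\infty\mathbf H^{k+1}\|_F\le(1-\gamma(1-\sigma))\|\mathbf H^k-\mathbf W^\infty\mathbf H^k\|_F+4\gamma\|\mathbf E^k\|_F+2\gamma(1-\delta)\|\mathbf H^k-\tilde{\mathbf H}^k\|_F+L_2\|\mathbf x^{k+1}-\mathbf x^k\|.$$
   Context: $W\in\mathbb{R}^{n\times n}$ is entrywise nonnegative, symmetric, $W1_n=1_n$, with $w_{ij}=0$ iff $j$ is neither $i$ nor a neighbor of $i$ in an undirected connected graph; $\sigma=\|W-\frac1n1_n1_n^T\|$. Each $f_i:\mathbb{R}^d\to\mathbb{R}$ is $C^2$ with $L_1$-Lipschitz gradient and $L_2$-Lipschitz Hessian. $\mathcal Q:\mathbb{R}^{d\times d}\to\mathbb{R}^{d\times d}$ is deterministic with $\|\mathcal Q(A)-A\|_F\le(1-\delta)\|A\|_F$, $\delta\in(0,1]$, applied blockwise to $nd\times d$ matrices. Notation: $\mathbf x=[x_1;\dots;x_n]\in\mathbb{R}^{nd}$; $\mathbf W=W\otimes I_d$, $\mathbf W^\infty=\frac1n1_n1_n^T\otimes I_d$; $\nabla^2f(\mathbf x)=[\nabla^2f_1(x_1);\dots;\nabla^2f_n(x_n)]\in\mathbb{R}^{nd\times d}$. With $\gamma>0$, arbitrary points $\mathbf x^k\in\mathbb{R}^{nd}$, and arbitrary $\mathbf E^0,\tilde{\mathbf H}^0$, $H_i^0=\nabla^2f_i(x_i^0)$, the sequences satisfy for $k\ge0$: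 $\mathbf E^{k+1}=\mathbf E^k+\mathbf H^k-\tilde{\mathbf H}^k-\mathcal Q(\mathbf E^k+\mathbf H^k-\tilde{\mathbf H}^k)$; $\tilde{\mathbf H}^{k+1}=\tilde{\mathbf H}^k+\mathcal Q(\mathbf H^k-\tilde{\mathbf H}^k)$; $\hat{\mathbf H}^k=\tilde{\mathbf H}^k+\mathcal Q(\mathbf E^k+\mathbf H^k-\tilde{\mathbf H}^k)$; $\mathbf H^{k+1}=\mathbf H^k-\gamma(I_{nd}-\mathbf W)\hat{\mathbf H}^k+\nabla^2f(\mathbf x^{k+1})-\nabla^2f(\mathbf x^k)$. *)

(* Defs.v *)
From HB Require Import structures.
From mathcomp Require Import all_boot all_order all_algebra.
From mathcomp Require Import all_classical all_reals all_analysis.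
Set Implicit Arguments. Unset Strict Implicit. Unset Printing Implicit Defensive.
Import Order.TTheory GRing.Theory Num.Theory.
Import numFieldNormedType.Exports.
Local Open Scope classical_set_scope.
Local Open Scope ring_scope.

Section Defs.
Variable R : realType.

Definition frob (p q : nat) (A : 'M[R]_(p, q)) : R :=
  Num.sqrt (\sum_(i < p) \sum_(j < q) A i j ^+ 2).

(* A stacked object [X_1; ...; X_n] (an np x q matrix) is represented as the
   family of its n blocks; its Frobenius norm: *)
Definition stnorm (n p q : nat) (X : 'I_n -> 'M[R]_(p, q)) : R :=
  Num.sqrt (\sum_(i < n) frob (X i) ^+ 2).

(* (W ⊗ I) X, block i *)
Definition mix (n p q : nat) (W : 'M[R]_n) (X : 'I_n -> 'M[R]_(p, q)) :
  'I_n -> 'M[R]_(p, q) := fun i => \sum_(j < n) W i j *: X j.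

(* W^oo X = (1/n 1 1^T ⊗ I) X, block i *)
Definition avg (n p q : nat) (X : 'I_n -> 'M[R]_(p, q)) :
  'I_n -> 'M[R]_(p, q) := fun _ => n%:R^-1 *: \sum_(j < n) X j.

Definition opnorm (m p : nat) (A : 'M[R]_(m, p)) : R :=
  sup [set frob (A *m v) | v in [set v : 'cV[R]_p | frob v <= 1]].

Definition ebasis (d : nat) (a : 'I_d) : 'rV[R]_d := delta_mx 0 a.

Definition partial (d : nat) (f : 'rV[R]_d -> R) (a : 'I_d) : 'rV[R]_d -> R :=
  fun x => derive f x (ebasis a).

Definition grad (d : nat) (f : 'rV[R]_d -> R) (x : 'rV[R]_d) : 'rV[R]_d :=
  \row_a partial f a x.

Definition hess (d : nat) (f : 'rV[R]_d -> R) (x : 'rV[R]_d) : 'M[R]_d :=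
  \matrix_(a, b) partial (partial f b) a x.

Definition isC2 (d : nat) (f : 'rV[R]_d -> R) : Prop :=
  forall a b : 'I_d,
    (forall x, derivable f x (ebasis b)) /\
    (forall x, derivable (partial f b) x (ebasis a)) /\
    continuous (partial (partial f b) a).

End Defs.

(* Main.v *)
Require Import Defs.
From HB Require Import structures.
From mathcomp Require Import all_boot all_order all_algebra.
From mathcomp Require Import all_classical all_reals all_analysis.
From mathcomp Require Import ring lra.
Import Order.TTheory GRing.Theory Num.Theory.
Import numFieldNormedType.Exports.
Set Implicit Arguments. Unset Strict Implicit. Unset Printing Implicit Defensive.
Local Open Scope ring_scope.

Section Gen.
Variable R : realType.
Variable T : finType.

Definition ss (u : T -> R) := \sum_t u t ^+ 2.
Definition nrm (u : T -> R) := Num.sqrt (ss u).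

Lemma ss_ge0 u : 0 <= ss u.
Proof. by apply: sumr_ge0 => t _; exact: sqr_ge0. Qed.

Lemma ss0 u : ss u = 0 -> forall t, u t = 0.
Proof.
move=> h t.
have h1 : u t ^+ 2 = 0.
  by apply: (@psumr_eq0P _ _ predT (fun t => u t ^+ 2)) => // s _; exact: sqr_ge0.
by apply/eqP; rewrite -sqrf_eq0 h1.
Qed.

Lemma CS u v : (\sum_t u t * v t) ^+ 2 <= ss u * ss v.
Proof.
case: (eqVneq (ss v) 0) => hv.
  have v0 := ss0 hv.
  have -> : \sum_t u t * v t = 0 by apply: big1 => t _; rewrite v0 mulr0.
  by rewrite hv expr0n mulr0.
have svp : 0 < ss v by rewrite lt_def hv ss_ge0.
set c := (\sum_t u t * v t) / ss v.
have e : forall s, (u s - c * v s)^+2 = u s ^+2 + ((-(2*c)) * (u s * v s) + c^+2 * v s ^+2).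
  by move=> s; ring.
have h0 : 0 <= \sum_s (u s - c * v s)^+2 by apply: sumr_ge0 => s _; exact: sqr_ge0.
rewrite (eq_bigr _ (fun s _ => e s)) !big_split /= -!mulr_sumr in h0.
have hc : c * ss v = \sum_t u t * v t by rewrite /c mulfVK.
rewrite -hc. rewrite -/(ss u) -/(ss v) in h0.
rewrite -hc in h0. have := ss_ge0 u. nra.
Qed.

Lemma nrm_ge0 u : 0 <= nrm u.
Proof. exact: sqrtr_ge0. Qed.

Lemma nrm_sq u : nrm u ^+ 2 = ss u.
Proof. by rewrite sqr_sqrtr // ss_ge0. Qed.

Lemma nrm_triangle u v : nrm (fun t => u t + v t) <= nrm u + nrm v.
Proof.
have h1 : ss (fun t => u t + v t) = ss u + (2 * \sum_t u t * v t + ss v).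
  rewrite /ss mulr_sumr -!big_split /=; apply: eq_bigr => t _; ring.
have h2 : \sum_t u t * v t <= nrm u * nrm v.
  apply: (le_trans (ler_norm _)).
  rewrite -sqrtr_sqr -sqrtrM ?ss_ge0 // ler_sqrt; last by apply: mulr_ge0; exact: ss_ge0.
  exact: CS.
have a0 := nrm_ge0 u; have b0 := nrm_ge0 v; have c0 := nrm_ge0 (fun t => u t + v t).
have hs : nrm (fun t => u t + v t) ^+ 2 <= (nrm u + nrm v) ^+ 2.
  by rewrite nrm_sq h1 sqrrD !nrm_sq; lra.
nra.
Qed.

Lemma nrm_scale c u : nrm (fun t => c * u t) = `|c| * nrm u.
Proof.
rewrite /nrm /ss.
rewrite (eq_bigr (fun t => c ^+ 2 * u t ^+ 2)); last by move=> t _; rewrite exprMn.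
by rewrite -mulr_sumr sqrtrM ?sqr_ge0 // sqrtr_sqr.
Qed.

Lemma nrm_ext u v : u =1 v -> nrm u = nrm v.
Proof. by move=> h; rewrite /nrm /ss; congr Num.sqrt; apply: eq_bigr => t _; rewrite h. Qed.

End Gen.
Section St.
Variable R : realType.
Variables n p q : nat.
Implicit Types X Y : 'I_n -> 'M[R]_(p, q).

Lemma frob_ge0 (A : 'M[R]_(p, q)) : 0 <= frob A.
Proof. exact: sqrtr_ge0. Qed.

Lemma frob_sq (A : 'M[R]_(p, q)) : frob A ^+ 2 = \sum_a \sum_b A a b ^+ 2.
Proof. by rewrite sqr_sqrtr // sumr_ge0 // => a _; rewrite sumr_ge0 // => b _; exact: sqr_ge0. Qed.

Lemma stnorm_ge0 X : 0 <= stnorm X.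
Proof. exact: sqrtr_ge0. Qed.

Lemma stnorm_sq0 X : stnorm X ^+ 2 = \sum_i frob (X i) ^+ 2.
Proof. by rewrite sqr_sqrtr // sumr_ge0 // => i _; exact: sqr_ge0. Qed.

Lemma stnorm_nrm X : stnorm X = nrm (fun t : 'I_n * ('I_p * 'I_q) => X t.1 t.2.1 t.2.2).
Proof.
rewrite /stnorm /nrm /ss; congr Num.sqrt.
rewrite -(pair_bigA _ (fun i (j : 'I_p * 'I_q) => X i j.1 j.2 ^+ 2)) /=.
apply: eq_bigr => i _; rewrite frob_sq.
exact: (pair_bigA _ (fun a b => X i a b ^+ 2)).
Qed.

Lemma stnorm_sq X : stnorm X ^+ 2 = \sum_a \sum_b \sum_i X i a b ^+ 2.
Proof.
rewrite stnorm_sq0 (eq_bigr _ (fun i _ => frob_sq (X i))) exchange_big /=.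
by apply: eq_bigr => a _; rewrite exchange_big.
Qed.

Lemma stnorm_ext X Y : (forall i, X i = Y i) -> stnorm X = stnorm Y.
Proof. by move=> h; rewrite /stnorm; congr Num.sqrt; apply: eq_bigr => i _; rewrite h. Qed.

Lemma stnorm_add X Y : stnorm (fun i => X i + Y i) <= stnorm X + stnorm Y.
Proof.
rewrite !stnorm_nrm; apply: le_trans (nrm_triangle _ _).
by rewrite le_eqVlt; apply/orP; left; apply/eqP; apply: nrm_ext => t /=; rewrite mxE.
Qed.

Lemma stnorm_scale c X : stnorm (fun i => c *: X i) = `|c| * stnorm X.
Proof.
rewrite !stnorm_nrm -nrm_scale; apply: nrm_ext => t /=; by rewrite mxE.
Qed.

Lemma stnorm_opp X : stnorm (fun i => - X i) = stnorm X.
Proof.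
have -> : stnorm X = `|-1 : R| * stnorm X by rewrite normrN normr1 mul1r.
rewrite -stnorm_scale; apply: stnorm_ext => i; by rewrite scaleN1r.
Qed.

Lemma stnorm_sub X Y : stnorm (fun i => X i - Y i) <= stnorm X + stnorm Y.
Proof. by apply: le_trans (stnorm_add _ _) _; rewrite stnorm_opp. Qed.

Lemma stnorm_entry c X Y : 0 <= c ->
  (forall a b, \sum_i X i a b ^+ 2 <= c ^+ 2 * \sum_i Y i a b ^+ 2) ->
  stnorm X <= c * stnorm Y.
Proof.
move=> hc h.
have hs : stnorm X ^+ 2 <= (c * stnorm Y) ^+ 2.
  rewrite exprMn !stnorm_sq mulr_sumr; apply: ler_sum => a _.
  rewrite mulr_sumr; apply: ler_sum => b _; exact: h.
have := stnorm_ge0 X; have := mulr_ge0 hc (stnorm_ge0 Y); nra.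
Qed.

End St.

Section Blk.
Variable R : realType.
Lemma stnorm_block n p q p' q' c (X : 'I_n -> 'M[R]_(p, q)) (Y : 'I_n -> 'M[R]_(p', q')) : (forall i, frob (X i) <= c * frob (Y i)) ->
  stnorm X <= c * stnorm Y.
Proof.
move=> h; case: (lerP 0 c) => hc.
  have hs : stnorm X ^+ 2 <= (c * stnorm Y) ^+ 2.
    rewrite exprMn !stnorm_sq0 mulr_sumr; apply: ler_sum => i _.
    rewrite -exprMn; have := h i; have := frob_ge0 (X i).
    have := mulr_ge0 hc (frob_ge0 (Y i)); nra.
  have := stnorm_ge0 X; have := mulr_ge0 hc (stnorm_ge0 Y); nra.
have hY : forall i, frob (Y i) = 0.
  move=> i; have := h i; have := frob_ge0 (X i); have := frob_ge0 (Y i); nra.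
have hX : forall i, frob (X i) = 0.
  move=> i; have := h i; have := frob_ge0 (X i); rewrite hY; nra.
rewrite /stnorm !big1 ?sqrtr0 ?mulr0 // => i _; by rewrite ?hX ?hY expr0n.
Qed.

End Blk.
Section Ops.
Variable R : realType.

Lemma frob_nrm p q (A : 'M[R]_(p, q)) : frob A = nrm (fun t : 'I_p * 'I_q => A t.1 t.2).
Proof.
rewrite /frob /nrm /ss; congr Num.sqrt.
exact: (pair_bigA _ (fun a b => A a b ^+ 2)).
Qed.

Lemma frob_scale p q c (A : 'M[R]_(p, q)) : frob (c *: A) = `|c| * frob A.
Proof. by rewrite !frob_nrm -nrm_scale; apply: nrm_ext => t; rewrite mxE. Qed.

Lemma frob0 p q : frob (0 : 'M[R]_(p, q)) = 0.
Proof. by rewrite -(scale0r (0 : 'M[R]_(p,q))) frob_scale normr0 mul0r. Qed.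

Lemma frob_col p (v : 'cV[R]_p) : frob v ^+ 2 = \sum_j v j 0 ^+ 2.
Proof. by rewrite frob_sq; apply: eq_bigr => j _; rewrite big_ord1. Qed.

Lemma frob_mul_le m p (A : 'M[R]_(m, p)) (w : 'cV[R]_p) : frob (A *m w) <= frob A * frob w.
Proof.
have hs : frob (A *m w) ^+ 2 <= (frob A * frob w) ^+ 2.
  rewrite exprMn frob_col frob_sq frob_col mulr_suml; apply: ler_sum => i _.
  rewrite mxE; exact: (CS (fun j => A i j) (fun j => w j 0)).
have := frob_ge0 (A *m w); have := mulr_ge0 (frob_ge0 A) (frob_ge0 w); nra.
Qed.

Lemma opnorm_le m p (A : 'M[R]_(m, p)) (v : 'cV[R]_p) :
  frob (A *m v) <= opnorm A * frob v /\ 0 <= opnorm A.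
Proof.
set S := [set frob (A *m w) | w in [set w : 'cV[R]_p | frob w <= 1]]%classic.
have hub : has_ubound S.
  exists (frob A) => r [w hw <-]; apply: le_trans (frob_mul_le A w) _.
  have := frob_ge0 A; have := frob_ge0 w; move: hw; rewrite /= => hw; nra.
have ub := ub_le_sup hub.
have s0 : 0 <= opnorm A.
  apply: (le_trans _ (ub 0 _)) => //; exists 0; rewrite /= ?frob0 ?mulmx0 ?frob0 //.
split=> //.
case: (eqVneq (frob v) 0) => hv.
  have := frob_mul_le A v; rewrite hv mulr0 => h; by rewrite mulr0.
have vp : 0 < frob v by rewrite lt_def hv frob_ge0.
have hw : S (frob (A *m ((frob v)^-1 *: v))).
  exists ((frob v)^-1 *: v) => //=.
  by rewrite frob_scale ger0_norm ?invr_ge0 ?frob_ge0 // mulVf.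
have := ub _ hw; rewrite -scalemxAr frob_scale ger0_norm ?invr_ge0 ?frob_ge0 //.
by rewrite ler_pdivrMl // mulrC.
Qed.

Variable n : nat.
Variable W : 'M[R]_n.
Hypothesis W0 : forall i j, 0 <= W i j.
Hypothesis WT : W^T = W.
Hypothesis W1 : forall i, \sum_(j < n) W i j = 1.

Lemma Wsym i j : W i j = W j i.
Proof. by rewrite -{1}WT mxE. Qed.

Lemma Wcol j : \sum_(i < n) W i j = 1.
Proof. by rewrite -(W1 j); apply: eq_bigr => i _; rewrite Wsym. Qed.

Lemma W_contr (z : 'I_n -> R) :
  \sum_i (\sum_j W i j * z j) ^+ 2 <= \sum_i z i ^+ 2.
Proof.
have h1 : forall i, (\sum_j W i j * z j) ^+ 2 <= \sum_j W i j * z j ^+ 2.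
  move=> i.
  have := CS (fun j => Num.sqrt (W i j)) (fun j => Num.sqrt (W i j) * z j).
  rewrite /ss.
  have -> : \sum_j Num.sqrt (W i j) * (Num.sqrt (W i j) * z j) = \sum_j W i j * z j.
    by apply: eq_bigr => j _; rewrite mulrA -expr2 sqr_sqrtr.
  have -> : \sum_j Num.sqrt (W i j) ^+ 2 = 1.
    by rewrite -(W1 i); apply: eq_bigr => j _; rewrite sqr_sqrtr.
  have -> : \sum_j (Num.sqrt (W i j) * z j) ^+ 2 = \sum_j W i j * z j ^+ 2.
    by apply: eq_bigr => j _; rewrite exprMn sqr_sqrtr.
  by rewrite mul1r.
apply: le_trans (ler_sum _ (fun i _ => h1 i)) _.
rewrite exchange_big /=; rewrite le_eqVlt; apply/orP; left; apply/eqP.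
by apply: eq_bigr => j _; rewrite -mulr_suml Wcol mul1r.
Qed.

Lemma W_sigma (y : 'I_n -> R) : \sum_j y j = 0 ->
  \sum_i (\sum_j W i j * y j) ^+ 2 <=
    opnorm (W - n%:R^-1 *: const_mx 1) ^+ 2 * \sum_i y i ^+ 2.
Proof.
move=> hy.
set M := W - n%:R^-1 *: const_mx 1.
have [h s0] := opnorm_le M (\col_j y j).
have e1 : frob (M *m \col_j y j) ^+ 2 = \sum_i (\sum_j W i j * y j) ^+ 2.
  rewrite frob_col; apply: eq_bigr => i _; congr (_ ^+ 2).
  rewrite mxE.
  rewrite (eq_bigr (fun j => W i j * y j - n%:R^-1 * y j)); last first.
    by move=> j _; rewrite !mxE mulr1 mulrBl.
  by rewrite sumrB -mulr_sumr hy mulr0 subr0.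
have e2 : frob (\col_j y j : 'cV[R]_n) ^+ 2 = \sum_i y i ^+ 2.
  by rewrite frob_col; apply: eq_bigr => j _; rewrite mxE.
rewrite -e1 -e2 -exprMn.
have := frob_ge0 (M *m \col_j y j); have := mulr_ge0 s0 (frob_ge0 (\col_j y j : 'cV[R]_n)).
move: h; nra.
Qed.

Lemma proj_le (z : 'I_n -> R) :
  \sum_i (z i - n%:R^-1 * \sum_j z j) ^+ 2 <= \sum_i z i ^+ 2.
Proof.
set S := \sum_j z j; set m := n%:R^-1 * S.
have hS : S = n%:R * m.
  case: (posnP n) => hn.
    rewrite hn mul0r /S; apply: big1 => j _; have := ltn_ord j; move: (nat_of_ord j) => k; by rewrite hn.
  by rewrite /m mulrA mulfV ?mul1r // pnatr_eq0 -lt0n.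
have e : forall i, (z i - m) ^+ 2 = z i ^+ 2 + ((- (2 * m)) * z i + m ^+ 2) by move=> i; ring.
rewrite (eq_bigr _ (fun i _ => e i)) !big_split /= -mulr_sumr -/S sumr_const card_ord.
rewrite hS -mulr_natl.
have : 0 <= n%:R * m ^+ 2 :> R by apply: mulr_ge0; [exact: ler0n | exact: sqr_ge0].
lra.
Qed.

End Ops.
Section Aux.
Variable R : realType.
Lemma mix_entry n p q (W : 'M[R]_n) (X : 'I_n -> 'M[R]_(p, q)) i a b :
  mix W X i a b = \sum_j W i j * X j a b.
Proof. by rewrite /mix summxE; apply: eq_bigr => j _; rewrite mxE. Qed.

Lemma avg_entry n p q (X : 'I_n -> 'M[R]_(p, q)) i a b :
  avg X i a b = n%:R^-1 * \sum_j X j a b.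
Proof. by rewrite /avg mxE summxE. Qed.

Lemma sum_dev n (z : 'I_n -> R) : \sum_j (z j - n%:R^-1 * \sum_l z l) = 0.
Proof.
rewrite sumrB sumr_const card_ord -mulrnAl -mulr_natr.
case: (posnP n) => hn.
  have -> : \sum_l z l = 0.
    apply: big1 => j _; have := ltn_ord j; move: (nat_of_ord j) => k; by rewrite hn.
  by rewrite mulr0 subrr.
by rewrite mulVf ?mul1r ?subrr // pnatr_eq0 -lt0n.
Qed.
End Aux.
Unset Implicit Arguments.
Theorem lemma8 (R : realType) (n d : nat)
  (W : 'M[R]_n) (e : rel 'I_n)
  (f : 'I_n -> 'rV[R]_d -> R) (L1 L2 : R)
  (Q : 'M[R]_d -> 'M[R]_d) (delta gamma : R)
  (x : nat -> 'I_n -> 'rV[R]_d)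
  (E Ht H : nat -> 'I_n -> 'M[R]_d) :
  (* communication graph: undirected (symmetric, loopless) and connected *)
  (forall i j, e i j = e j i) -> (forall i, ~~ e i i) ->
  (forall i j, connect e i j) ->
  (* mixing matrix *)
  (forall i j, 0 <= W i j) -> W^T = W ->
  (forall i, \sum_(j < n) W i j = 1) ->
  (forall i j, W i j = 0 <-> (j != i /\ ~~ e i j)) ->
  (* local functions *)
  (forall i, isC2 (f i)) ->
  (forall i y z, frob (grad (f i) y - grad (f i) z) <= L1 * frob (y - z)) ->
  (forall i y z, frob (hess (f i) y - hess (f i) z) <= L2 * frob (y - z)) ->
  (* compressor *)
  0 < delta -> delta <= 1 ->
  (forall A, frob (Q A - A) <= (1 - delta) * frob A) ->
  (* iteration *)
  0 < gamma ->
  (forall i, H 0%N i = hess (f i) (x 0%N i)) ->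
  (forall k i, E k.+1 i = E k i + H k i - Ht k i - Q (E k i + H k i - Ht k i)) ->
  (forall k i, Ht k.+1 i = Ht k i + Q (H k i - Ht k i)) ->
  let Hhat := fun k i => Ht k i + Q (E k i + H k i - Ht k i) in
  (forall k i, H k.+1 i = H k i - gamma *: (Hhat k i - mix W (Hhat k) i)
                          + hess (f i) (x k.+1 i) - hess (f i) (x k i)) ->
  let sigma := opnorm (W - n%:R^-1 *: const_mx 1) in
  gamma < 1 ->
  forall k : nat,
    stnorm (fun i => H k.+1 i - avg (H k.+1) i)
    <= (1 - gamma * (1 - sigma)) * stnorm (fun i => H k i - avg (H k) i)
       + 4 * gamma * stnorm (E k)
       + 2 * gamma * (1 - delta) * stnorm (fun i => H k i - Ht k i)
       + L2 * stnorm (fun i => x k.+1 i - x k i).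
Proof.
move=> he hirr hconn hW0 hWT hW1 hWe hC2 hL1 hL2 hd0 hd1 hQ hg hH0 hE hHt Hhat hH sigma hg1 k.
pose A := fun i => E k i + H k i - Ht k i.
pose c := fun i => Q (A i) - A i.
pose Z := fun i => E k i + c i.
pose Y := fun i => H k i - avg (H k) i.
pose Dl := fun i => hess (f i) (x k.+1 i) - hess (f i) (x k i).
have F1 : forall i, Hhat k i = H k i + Z i.
  move=> i; rewrite /Hhat /Z /c /A.
  apply/matrixP => a b; rewrite !mxE; ring.
have F2 : forall i, mix W Y i = mix W (H k) i - avg (H k) i.
  move=> i; rewrite /mix /Y.
  rewrite (eq_bigr (fun j => W i j *: H k j - W i j *: avg (H k) i)); last first.
    by move=> j _; rewrite scalerBr.
  by rewrite sumrB -scaler_suml hW1 scale1r.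
have F3 : forall i, mix W (Hhat k) i = mix W (H k) i + mix W Z i.
  move=> i; rewrite /mix -big_split /=; apply: eq_bigr => j _.
  by rewrite F1 scalerDr.
have G : forall X : 'I_n -> 'M[R]_d, \sum_j mix W X j = \sum_j X j.
  move=> X; rewrite /mix exchange_big /=; apply: eq_bigr => j _.
  by rewrite -scaler_suml (Wcol hWT hW1) scale1r.
have F4 : forall i, avg (H k.+1) i = avg (H k) i + avg Dl i.
  move=> i; rewrite /avg -scalerDr; congr (_ *: _).
  rewrite (eq_bigr _ (fun j _ => hH k j)).
  rewrite (eq_bigr (fun j => (H k j + Dl j) - gamma *: (Hhat k j - mix W (Hhat k) j))); last first.
    move=> j _; rewrite /Dl.
    set u := Hhat k j - mix W (Hhat k) j.
    apply/matrixP => a b; rewrite !mxE; ring.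
  have G' : \sum_j (Hhat k j - mix W (Hhat k) j) = 0 by rewrite sumrB G subrr.
  by rewrite sumrB -scaler_sumr G' scaler0 subr0 big_split.
have Fid : forall i, H k.+1 i - avg (H k.+1) i =
   (((1 - gamma) *: Y i + gamma *: mix W Y i) - gamma *: (Z i - mix W Z i)) + (Dl i - avg Dl i).
  move=> i; rewrite hH F4 F2 F3 F1 /Y /Dl.
  set m1 := avg (H k) i; set m2 := avg _ i; set w1 := mix W (H k) i; set w2 := mix W Z i.
  apply/matrixP => a b; rewrite !mxE; ring.
rewrite (stnorm_ext Fid).
have sig0 : 0 <= sigma by case: (opnorm_le (W - n%:R^-1 *: const_mx 1) 0).
have B1 : stnorm (fun i => (1 - gamma) *: Y i) = (1 - gamma) * stnorm Y.
  by rewrite stnorm_scale ger0_norm // subr_ge0 ltW.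
have B2 : stnorm (fun i => gamma *: mix W Y i) <= gamma * (sigma * stnorm Y).
  rewrite stnorm_scale (ger0_norm (ltW hg)); apply: (ler_wpM2l (ltW hg)).

  apply: stnorm_entry => // a b.
  under eq_bigr do rewrite mix_entry.
  apply: (@W_sigma R n W (fun j => Y j a b)).
  rewrite /Y; under eq_bigr do rewrite !mxE ?avg_entry ?summxE.
  exact: (sum_dev (fun j => H k j a b)).
have BWZ : stnorm (mix W Z) <= 1 * stnorm Z.
  apply: stnorm_entry => // a b.
  under eq_bigr do rewrite mix_entry.
  rewrite expr1n mul1r; exact: (W_contr hW0 hWT hW1 (fun j => Z j a b)).
have B3 : stnorm (fun i => gamma *: (Z i - mix W Z i)) <= gamma * (2 * stnorm Z).
  rewrite stnorm_scale (ger0_norm (ltW hg)); apply: (ler_wpM2l (ltW hg)).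

  apply: le_trans (stnorm_sub _ _) _; lra.
have B4 : stnorm (fun i => Dl i - avg Dl i) <= L2 * stnorm (fun i => x k.+1 i - x k i).
  have PJ : forall X : 'I_n -> 'M[R]_d, stnorm (fun i => X i - avg X i) <= stnorm X.
    move=> X; rewrite -[X in _ <= X]mul1r; apply: stnorm_entry => // a b.
    rewrite expr1n mul1r; under eq_bigr do rewrite !mxE ?avg_entry ?summxE.
    exact: (proj_le (fun j => X j a b)).
  apply: le_trans (PJ Dl) _.
  apply: stnorm_block => i; exact: hL2.
have BZ : stnorm Z <= stnorm (E k) + stnorm c by exact: stnorm_add.
have Bc : stnorm c <= (1 - delta) * stnorm A by apply: stnorm_block => i; exact: hQ.
have BA : stnorm A <= stnorm (E k) + stnorm (fun i => H k i - Ht k i).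
  have -> : stnorm A = stnorm (fun i => E k i + (H k i - Ht k i)).
    by apply: stnorm_ext => i; rewrite /A addrA.
  exact: stnorm_add.
have T : stnorm (fun i => (((1 - gamma) *: Y i + gamma *: mix W Y i) - gamma *: (Z i - mix W Z i)) + (Dl i - avg Dl i))
   <= (1 - gamma) * stnorm Y + gamma * (sigma * stnorm Y) + gamma * (2 * stnorm Z)
      + L2 * stnorm (fun i => x k.+1 i - x k i).
  apply: le_trans (stnorm_add _ _) _.
  apply: lerD B4.
  apply: le_trans (stnorm_sub _ _) _.
  apply: lerD B3.
  apply: le_trans (stnorm_add _ _) _.
  by rewrite B1; apply: lerD.
apply: le_trans T _.
have sE := stnorm_ge0 (E k); have sHH := stnorm_ge0 (fun i => H k i - Ht k i).
have hZ : stnorm Z <= stnorm (E k) + (1 - delta) * (stnorm (E k) + stnorm (fun i => H k i - Ht k i)).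
  apply: le_trans BZ _; apply: lerD => //; apply: le_trans Bc _.
  apply: ler_wpM2l => //; lra.
have hZ2 : stnorm Z <= 2 * stnorm (E k) + (1 - delta) * stnorm (fun i => H k i - Ht k i).
  have : (1 - delta) * stnorm (E k) <= stnorm (E k) by nra.
  lra.
have := ler_wpM2l (ltW hg) hZ2.
rewrite /Y; nra.
Qed.
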